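(* For $n\ge 4$, the wheel $W_n$ satisfies $\nu^*(W_n)=\frac{13n^2+n}{2}$.
   Context: For a finite simple graph $G=(V,E)$ with $\ell=|V|+|E|$, a construction sequence (c-sequence) is a bijection $x:\{1,\dots,\ell\}\to V\sqcup E$ such that every edge $e=uw$ satisfies $x^{-1}(e)>\max\{x^{-1}(u),x^{-1}(w)\}$. The cost of $x$ is $\nu(x)=\sum_{e=uw\in E}\big(2x^{-1}(e)-x^{-1}(u)-x^{-1}(w)\big)$, and $\nu^*(G)$ is the maximum of $\nu(x)$ over all c-sequences for $G$. The wheel $W_n=C_n*K_1$ is the $(n+1)$-vertex graph obtained from the cycle $C_n$ by adding a hub vertex adjacent to all $n$ cycle vertices. *)

(* Defs.v *)
From mathcomp Require Import all_boot all_order all_algebra.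
Set Implicit Arguments. Unset Strict Implicit. Unset Printing Implicit Defensive.
Import GRing.Theory Num.Theory.

(* A finite simple graph is given by a vertex finType T and an adjacency
   relation adj; its edge set consists of the 2-element sets {u,w} with
   u <> w and adj u w (adjacency is required symmetric & irreflexive where
   used; the edge set below is insensitive to this anyway). *)
Definition edges (T : finType) (adj : rel T) : {set {set T}} :=
  [set e : {set T} | [exists u : T, exists w : T,
     [&& u != w, adj u w & e == [set u; w]]]].

Definition elem (T : finType) (adj : rel T) : finType :=
  (T + {e : {set T} | e \in edges adj})%type.

(* A construction sequence x : {1..l} -> V ⊔ E is represented by the list
   s = [x 1; ...; x l]; bijectivity = s is a permutation of all elements,
   and x^{-1}(a) = index a s + 1. *)
Definition pos (T : finType) (adj : rel T) (s : seq (elem adj)) (a : elem adj) : nat :=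
  (index a s).+1.

Definition cseq (T : finType) (adj : rel T) (s : seq (elem adj)) : Prop :=
  perm_eq s (enum (elem adj)) /\
  forall e : {e : {set T} | e \in edges adj}, forall v : T,
    v \in val e -> pos s (inl v) < pos s (inr e).

Definition cost (T : finType) (adj : rel T) (s : seq (elem adj)) : int :=
  \sum_(e : {e : {set T} | e \in edges adj})
     ((2 * pos s (inr e))%:Z - (\sum_(v in val e) pos s (inl v))%:Z)%R.

Definition nu_star_is (T : finType) (adj : rel T) (N : int) : Prop :=
  (exists s : seq (elem adj), cseq s /\ cost s = N) /\ (forall s : seq (elem adj), cseq s -> (cost s <= N)%R).

(* Wheel W_n on vertices 'I_(n+1): cycle vertices 0..n-1 (i ~ i+1 mod n),
   hub = n adjacent to all cycle vertices. *)
Definition wheel_adj (n : nat) : rel 'I_n.+1 :=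
  fun i j => (i != j) &&
    [|| (i : nat) == n, (j : nat) == n, (i.+1 %% n == j) | (j.+1 %% n == i)].

(* Main.v *)
Require Import Defs.
From mathcomp Require Import all_boot all_order all_algebra.
From mathcomp Require Import zify.
Import GRing.Theory Num.Theory.
Set Implicit Arguments. Unset Strict Implicit. Unset Printing Implicit Defensive.

Lemma sumn_sorted_lb k r : sorted ltn r -> all (leq k) r ->
  2 * k * size r + size r * (size r).-1 <= 2 * sumn r.
Proof.
elim: r k => [|x r IH] k; first by rewrite /= !muln0.
move=> /= Hs /andP[kx Ha].
have Hr : sorted ltn r by case: r Hs {IH Ha} => //= y r /andP[_ ->].
have Ha' : all (leq k.+1) r.
  have /allP H := order_path_min ltn_trans Hs.
  apply/allP => z zr; exact: leq_ltn_trans kx (H z zr).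
have := IH _ Hr Ha'.
case: (size r) => [|m] /=; nia.
Qed.

Lemma sumn_uniq_lb r : uniq r -> size r * (size r).-1 <= 2 * sumn r.
Proof.
move=> Hu.
have Hs : sorted ltn (sort leq r) by rewrite ltn_sorted_uniq_leq sort_uniq Hu sort_sorted //; exact: leq_total.
have := sumn_sorted_lb (k:=0) Hs (introT allP (fun z _ => leq0n z)).
by rewrite (perm_sumn (permEl (perm_sort leq r))) size_sort mul0n add0n.
Qed.

Lemma sum_inj_lb (X : finType) (f : X -> nat) : injective f ->
  #|X| * #|X|.-1 <= 2 * \sum_x f x.
Proof.
move=> Hf.
have Hu : uniq (map f (enum X)) by rewrite map_inj_uniq // enum_uniq.
have := sumn_uniq_lb Hu.
by rewrite size_map -cardE sumnE big_map big_enum.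
Qed.

Section W.
Variable n : nat.
Hypothesis n4 : 4 <= n.
Local Notation hub := (@ord_max n).
Definition wv (i : 'I_n) : 'I_n.+1 := widen_ord (leqnSn n) i.
Definition spoke (i : 'I_n) : {set 'I_n.+1} := [set wv i; hub].
Definition rim (i : 'I_n) : {set 'I_n.+1} := [set wv i; wv (ordS i)].

Lemma wv_inj : injective wv.
Proof. by move=> i j /(congr1 val) /= /val_inj. Qed.

Lemma wv_hub i : (wv i == hub) = false.
Proof. apply/negbTE; rewrite -val_eqE /=; by rewrite neq_ltn ltn_ord. Qed.

Lemma spoke_inj : injective spoke.
Proof.
move=> i j /setP /(_ (wv i)); rewrite !inE eqxx /= wv_hub orbF.
by move=> /esym /eqP /wv_inj.
Qed.

Lemma ordS_val (i : 'I_n) : val (ordS i) = i.+1 %% n.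
Proof. by []. Qed.

Lemma rim_inj : injective rim.
Proof.
move=> i j H.
have := H; move=> /setP /(_ (wv i)); rewrite !inE eqxx /= => /esym /orP[/eqP/wv_inj -> //|/eqP/wv_inj Hi].
have := H; move=> /setP /(_ (wv j)); rewrite !inE eqxx /= => /orP[/eqP/wv_inj -> //|/eqP/wv_inj Hj].
exfalso.
have h1 : val i = (val j).+1 %% n by rewrite -ordS_val Hi.
have h2 : val j = (val i).+1 %% n by rewrite -ordS_val Hj.
have := ltn_ord i; have := ltn_ord j.
have m : forall c, c < n -> c.+1 %% n = if c.+1 == n then 0 else c.+1.
  move=> c hc; case: eqP => [->|ne]; first by rewrite modnn.
  by rewrite modn_small //; lia.
rewrite m ?ltn_ord // in h1; rewrite m ?ltn_ord // in h2.
move: h1 h2; case: eqP; case: eqP; lia.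
Qed.

Lemma wv_ord (v : 'I_n.+1) (h : val v < n) : v = wv (Ordinal h).
Proof. exact: val_inj. Qed.

Lemma hub_ord (v : 'I_n.+1) (h : val v = n) : v = hub.
Proof. exact: val_inj. Qed.

Lemma ordS_neq (i : 'I_n) : (wv i != wv (ordS i)).
Proof.
rewrite /wv -val_eqE /=.
have := ltn_ord i; case: (ltngtP i.+1 n) => h _.
- rewrite modn_small //; lia.
- lia.
- rewrite h modnn; lia.
Qed.

Lemma ord_cases (v : 'I_n.+1) : (v:nat) = n \/ v < n.
Proof. have := ltn_ord v; lia. Qed.

Lemma edgesE : edges (@wheel_adj n) = [set spoke i | i : 'I_n] :|: [set rim i | i : 'I_n].
Proof.
apply/setP => e; rewrite !inE; apply/idP/idP.
- move=> /existsP[u /existsP[w /and3P[uw Hadj /eqP->]]].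
  move: Hadj; rewrite /wheel_adj uw /=.
  case: (ord_cases w) => hw; case: (ord_cases u) => hu.
  + by move: uw; rewrite -val_eqE /= hu hw eqxx.
  + move=> _; apply/orP; left; apply/imsetP; exists (Ordinal hu) => //.
    by rewrite /spoke -(wv_ord hu) (hub_ord hw).
  + move=> _; apply/orP; left; apply/imsetP; exists (Ordinal hw) => //.
    by rewrite /spoke -(wv_ord hw) (hub_ord hu) setUC.
  + rewrite (ltn_eqF hu) (ltn_eqF hw) /= => /orP[/eqP H|/eqP H].
    * apply/orP; right; apply/imsetP; exists (Ordinal hu) => //.
      rewrite /rim -(wv_ord hu); congr [set _; _]; apply: val_inj; by rewrite /= H.
    * apply/orP; right; apply/imsetP; exists (Ordinal hw) => //.
      rewrite /rim -(wv_ord hw) setUC; congr [set _; _]; apply: val_inj; by rewrite /= H.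
- move=> /orP[/imsetP[i _ ->]|/imsetP[i _ ->]]; apply/existsP; exists (wv i); apply/existsP.
  + exists hub; rewrite wv_hub eqxx /= andbT /wheel_adj wv_hub /=.
    by rewrite eqxx orbT.
  + exists (wv (ordS i)); rewrite ordS_neq /= eqxx andbT /wheel_adj ordS_neq /=.
    by rewrite eqxx !orbT.
Qed.

Lemma disj_SR : [disjoint [set spoke i | i : 'I_n] & [set rim i | i : 'I_n]].
Proof.
rewrite -setI_eq0; apply/eqP/setP => x; rewrite in_setI in_set0.
apply/negP => /andP[/imsetP[i _ ->] /imsetP[j _ E]].
have : hub \in spoke i by rewrite !inE eqxx orbT.
by rewrite E !inE !(eq_sym hub) !wv_hub.
Qed.

Lemma sum_edges (F : {set 'I_n.+1} -> nat) :
  \sum_(e in edges (@wheel_adj n)) F e = \sum_i F (spoke i) + \sum_i F (rim i).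
Proof.
rewrite edgesE (@eq_bigl _ _ _ _ _ _ [predU [set spoke i | i : 'I_n] & [set rim i | i : 'I_n]]); last first.
  by move=> x; rewrite !inE.
rewrite bigU ?disj_SR // !big_imset //.
- by move=> x y _ _; apply: rim_inj.
- by move=> x y _ _; apply: spoke_inj.
Qed.

Lemma sum_pair (g : 'I_n.+1 -> nat) a b : a != b -> \sum_(v in [set a; b]) g v = g a + g b.
Proof. by move=> ab; rewrite big_setU1 ?big_set1 // inE. Qed.

Lemma card_edges : #|edges (@wheel_adj n)| = 2 * n.
Proof.
rewrite -sum1_card sum_edges !sum1_card card_ord; lia.
Qed.

Lemma edge_sum (g : 'I_n.+1 -> nat) :
  \sum_(e : {e : {set 'I_n.+1} | e \in edges (@wheel_adj n)}) \sum_(v in val e) g v + 3 * g hub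
  = 3 * \sum_v g v + n * g hub.
Proof.
rewrite -(big_sub (edges _) (fun e => \sum_(v in e) g v)) sum_edges.
rewrite (eq_bigr (fun i => g (wv i) + g hub)); last by move=> i _; rewrite sum_pair // wv_hub.
rewrite (eq_bigr (fun i => g (wv i) + g (wv (ordS i))) (F1 := fun i => \sum_(v in rim i) g v)); last by move=> i _; rewrite sum_pair // ordS_neq.
rewrite !big_split /= sum_nat_const card_ord.
have -> : \sum_(i < n) g (wv (ordS i)) = \sum_(i < n) g (wv i).
  by rewrite (reindex_inj (@ordS_inj n) (F := fun i => g (wv i))).
rewrite big_ord_recr /=.
rewrite (_ : \sum_(i < n) g (widen_ord (leqnSn n) i) = \sum_(i < n) g (wv i)) //.
lia.
Qed.
End W.

Lemma tri_sum L : 2 * \sum_(0 <= i < L) i.+1 = L * L.+1.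
Proof.
elim: L => [|L IH]; first by rewrite big_geq.
rewrite big_nat_recr //= mulnDr IH; nia.
Qed.

Lemma total (T : finType) (adj : rel T) (s : seq (elem adj)) :
  perm_eq s (enum (elem adj)) ->
  2 * \sum_(a : elem adj) pos s a = #|elem adj| * #|elem adj|.+1.
Proof.
move=> Hp.
have Hu : uniq s by rewrite (perm_uniq Hp) enum_uniq.
have Hsz : size s = #|elem adj| by rewrite (perm_size Hp) cardE.
rewrite -big_enum (perm_big s); last by rewrite perm_sym.
rewrite -Hsz.
case: s Hp Hu Hsz => [|x0 s'] Hp Hu Hsz; first by rewrite big_nil.
rewrite (big_nth x0) -tri_sum; congr (2 * _).
rewrite !big_nat; apply: eq_bigr => i /andP[_ hi].
by rewrite /pos index_uniq.
Qed.

Lemma arith_eq n q X A D : 2 * q = 13 * n ^ 2 + n -> 2 * (X + A) = (3 * n + 1) * (3 * n + 2) ->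
  2 * X = n.+1 * n.+2 -> D + 3 * 1 = 3 * X + n * 1 -> 2 * A = q + D.
Proof. nia. Qed.

Lemma arith_le n q X A D h : 4 <= n -> 2 * q = 13 * n ^ 2 + n -> 2 * (X + A) = (3 * n + 1) * (3 * n + 2) ->
  n.+1 * n.+2 <= 2 * X -> D + 3 * h = 3 * X + n * h -> 0 < h -> 2 * A <= q + D.
Proof. nia. Qed.

Section Main.
Variable n : nat.
Hypothesis n4 : 4 <= n.
Local Notation hub := (@ord_max n).
Local Notation EL := (elem (@wheel_adj n)).
Local Notation ET := {e : {set 'I_n.+1} | e \in edges (@wheel_adj n)}.

Lemma card_elem : #|EL| = 3 * n + 1.
Proof.
rewrite /elem card_sum card_ord card_sig.
rewrite (eq_card (B := edges (@wheel_adj n))) ?card_edges //; try lia.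
Qed.

Lemma sum_elem (F : EL -> nat) :
  \sum_(a : EL) F a = \sum_(v : 'I_n.+1) F (inl v) + \sum_(e : ET) F (inr e).
Proof. by rewrite big_sumType. Qed.

Lemma PS (I : finType) (F : I -> nat) : (\sum_i (Posz (F i)))%R = Posz (\sum_i F i).
Proof. by rewrite (big_morph Posz PoszD (erefl _)). Qed.

Lemma cost_eq (s : seq EL) : cost s =
  (Posz (2 * \sum_(e : ET) pos s (inr e)) - Posz (\sum_(e : ET) \sum_(v in val e) pos s (inl v)))%R.
Proof. by rewrite /cost sumrB !PS big_distrr. Qed.

Lemma key (s : seq EL) : perm_eq s (enum EL) ->
  let V := \sum_(v : 'I_n.+1) pos s (inl v) in
  let A := \sum_(e : ET) pos s (inr e) in
  let D := \sum_(e : ET) \sum_(v in val e) pos s (inl v) in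
  2 * (V + A) = (3 * n + 1) * (3 * n + 2) /\ D + 3 * pos s (inl hub) = 3 * V + n * pos s (inl hub).
Proof.
move=> Hp V A D; split.
- rewrite /V /A -sum_elem total // card_elem; congr (_ * _); lia.
- exact: (edge_sum n4 (fun v => pos s (inl v))).
Qed.

Lemma Vlb (s : seq EL) : perm_eq s (enum EL) ->
  (n.+1) * n.+2 <= 2 * \sum_(v : 'I_n.+1) pos s (inl v).
Proof.
move=> Hp.
have inj : injective (fun v : 'I_n.+1 => index (inl v : EL) s).
  move=> u v /index_inj H.
  have mem : forall x : EL, x \in s by move=> x; rewrite (perm_mem Hp) mem_enum.
  by case: (H (inl u) (mem _) (mem _)).
have H1 := sum_inj_lb inj; rewrite card_ord in H1.
rewrite /pos (eq_bigr (fun v => index (inl v : EL) s + 1)); last by move=> v _; rewrite addn1.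
rewrite big_split /= sum_nat_const card_ord /=.
have H2 : n.+1 * n <= 2 * \sum_(i < n.+1) index (inl i : EL) s := H1.
rewrite mulnDr; apply: leq_trans _ (leq_add H2 (leqnn (2 * (n.+1 * 1)))); nia.
Qed.

Definition ETt : finType := ET.
Definition vs : seq 'I_n.+1 := hub :: [seq wv i | i <- enum 'I_n].
Definition s1 : seq EL := [seq (inl v : EL) | v <- vs].
Definition s0 : seq EL := s1 ++ [seq (inr e : EL) | e <- enum ETt].

Lemma inl_inj' : injective (fun v : 'I_n.+1 => (inl v : EL)).
Proof. by move=> u v [->]. Qed.
Lemma inr_inj' : injective (fun e : ETt => (inr e : EL)).
Proof. by move=> u v [->]. Qed.

Lemma vs_uniq : uniq vs.
Proof.
rewrite /vs /= map_inj_uniq ?enum_uniq ?andbT; last exact: wv_inj.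
apply/mapP => -[i _ E]; by have := wv_hub i; rewrite -E eqxx.
Qed.

Lemma in_vs v : v \in vs.
Proof.
rewrite /vs inE; case: (ord_cases n4 v) => h.
- by rewrite (hub_ord h) eqxx.
- by rewrite (wv_ord h) map_f ?orbT ?mem_enum.
Qed.

Lemma in_s1 v : (inl v : EL) \in s1.
Proof. by rewrite /s1 map_f ?in_vs. Qed.

Lemma notin_s1 e : (inr e : EL) \in s1 = false.
Proof. by apply/negbTE/mapP => -[]. Qed.

Lemma s0_uniq : uniq s0.
Proof.
rewrite /s0 cat_uniq /s1 (map_inj_uniq inl_inj') vs_uniq (map_inj_uniq inr_inj') enum_uniq /= andbT.
by apply/hasP => -[x /mapP[e _ ->]]; rewrite -/s1 notin_s1.
Qed.

Lemma s0_perm : perm_eq s0 (enum EL).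
Proof.
apply: uniq_perm; [exact: s0_uniq | exact: enum_uniq |].
move=> x; rewrite mem_enum; case: x => [v|e]; rewrite /s0 mem_cat.
- by rewrite in_s1.
- by rewrite map_f ?orbT ?mem_enum.
Qed.

Lemma pos_hub : pos s0 (inl hub) = 1.
Proof. by rewrite /pos /s0 /s1 /vs /= eqxx. Qed.

Lemma pos_wv i : pos s0 (inl (wv i)) = i.+2.
Proof.
rewrite /pos /s0 index_cat in_s1 /s1 (index_map inl_inj') /vs /=.
by rewrite eq_sym wv_hub (index_map (@wv_inj n)) index_enum_ord.
Qed.

Lemma pos_lt v e : pos s0 (inl v) < pos s0 (inr e).
Proof.
rewrite /pos /s0 !index_cat in_s1 notin_s1 ltnS.
by rewrite (leq_trans _ (leq_addr _ _)) // index_mem in_s1.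
Qed.

Lemma tri2 L : 2 * \sum_(0 <= i < L) i.+2 = L * (L + 3).
Proof.
elim: L => [|L IH]; first by rewrite big_geq.
rewrite big_nat_recr //= mulnDr IH; nia.
Qed.

Lemma V0 : 2 * \sum_(v : 'I_n.+1) pos s0 (inl v) = n.+1 * n.+2.
Proof.
rewrite big_ord_recr /= pos_hub.
rewrite (eq_bigr (fun i : 'I_n => (i:nat).+2)); last by move=> i _; exact: pos_wv.
rewrite -(big_mkord xpredT (fun i => i.+2)) mulnDr tri2; nia.
Qed.

Lemma main_res q : 2 * q = 13 * n ^ 2 + n -> nu_star_is (@wheel_adj n) (Posz q).
Proof.
move=> Hq; split.
- exists s0; split.
  + split; [exact: s0_perm | move=> e v _; exact: pos_lt].
  + rewrite cost_eq; move: (key s0_perm) => /= [K1 K2].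
    have V := V0; rewrite pos_hub in K2.
    apply/eqP; rewrite subr_eq -PoszD; apply/eqP; congr Posz.
    exact: (arith_eq Hq K1 V K2).
- move=> s [Hp _]; rewrite cost_eq; move: (key Hp) => /= [K1 K2].
  have V := Vlb Hp.
  have h : 0 < pos s (inl hub) by [].
  rewrite lerBlDr -PoszD lez_nat.
  exact: (arith_le n4 Hq K1 V K2 h).
Qed.
End Main.

Theorem theorem7 (n : nat) : (4 <= n)%N ->
  nu_star_is (@wheel_adj n) (Posz ((13 * n ^ 2 + n) %/ 2)%N) /\ ~~ odd (13 * n ^ 2 + n)%N.
Proof.
move=> n4.
have Hodd : ~~ odd (13 * n ^ 2 + n) by rewrite oddD oddM oddX /=; case: (odd n).
split => //.
apply: main_res => //.
by rewrite mulnC divnK // dvdn2.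
Qed.
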